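(* There exist absolute positive constants $c,C$ such that the following holds. Let $W$ be a non-negative integer-valued random variable with $EW=\lambda\in(0,\infty)$, and let $W^s$ be defined on the same probability space as $W$ with the $W$-size biased distribution. Set $\Delta=W+1-W^s$ and assume $\Delta\in\{-1,0,1\}$ almost surely and that there are non-negative constants $\delta_1,\delta_2$ with $$P(\Delta=-1\mid W)\le\delta_1,\qquad P(\Delta=1\mid W)\le \delta_2 W\quad\text{almost surely}.$$ Let $Y\sim\mathrm{Poi}(\lambda)$. Then for every integer $k\ge\lambda$ such that, with $\xi=(k-\lambda)/\sqrt\lambda$, $(\delta_1+\delta_2\lambda)(1+\xi^2)\le c$, we have $$\Big|\frac{P(W\ge k)}{P(Y\ge k)}-1\Big|\le C(\delta_1+\delta_2\lambda)(1+\xi^2).$$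
   Context: For a non-negative random variable $W$ with $EW=\lambda>0$, a random variable $W^s$ has the $W$-size biased distribution if $E[Wf(W)]=\lambda E[f(W^s)]$ for all functions $f$ for which the expectations exist. $\mathrm{Poi}(\lambda)$ is the Poisson distribution with mean $\lambda$. *)

(* Defs.v *)
From Stdlib Require Import Reals Arith Factorial.
Open Scope R_scope.

Fixpoint psum (f : nat -> R) (k : nat) : R :=
  match k with
  | O => 0
  | S k' => psum f k' + f k'
  end.

Definition poi_pmf (lam : R) (j : nat) : R :=
  exp (- lam) * lam ^ j / INR (fact j).

Definition poi_tail (lam : R) (k : nat) : R :=
  1 - psum (poi_pmf lam) k.

(* For a probability mass function p on nat (total mass 1), P(X >= k). *)
Definition pmf_tail (p : nat -> R) (k : nat) : R :=
  1 - psum p k.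

Definition abs_summable (u : nat -> R) : Prop :=
  exists l, infinite_sum (fun n => Rabs (u n)) l.

(* Size-bias relation between the law pW of W (mean lam) and the law pWs
   of W^s:  E[W f(W)] = lam E[f(W^s)] for all f for which both
   expectations exist. *)
Definition size_biased (pW pWs : nat -> R) (lam : R) : Prop :=
  forall f : nat -> R,
    abs_summable (fun n => INR n * f n * pW n) ->
    abs_summable (fun n => f n * pWs n) ->
    forall a b,
      infinite_sum (fun n => INR n * f n * pW n) a ->
      infinite_sum (fun n => f n * pWs n) b ->
      a = lam * b.

(* Main.v *)
Require Import Defs.
From Stdlib Require Import Reals Lra Lia Arith Factorial.
Open Scope R_scope.

Lemma psum_S f n : psum f (S n) = psum f n + f n.
Proof. reflexivity. Qed.

Lemma sum_f_R0_psum f n : sum_f_R0 f n = psum f (S n).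
Proof. induction n; simpl. lra. rewrite IHn. simpl. lra. Qed.

Lemma psum_ext f g n : (forall i, (i < n)%nat -> f i = g i) -> psum f n = psum g n.
Proof. induction n; intros H; simpl. lra. rewrite IHn by (intros; apply H; lia). rewrite H by lia. lra. Qed.

Lemma psum_le f g n : (forall i, (i < n)%nat -> f i <= g i) -> psum f n <= psum g n.
Proof. induction n; intros H; simpl. lra. assert (psum f n <= psum g n) by (apply IHn; intros; apply H; lia). specialize (H n ltac:(lia)). lra. Qed.

Lemma psum_nonneg f n : (forall i, 0 <= f i) -> 0 <= psum f n.
Proof. intros H; induction n; simpl. lra. specialize (H n). lra. Qed.

Lemma psum_mono f m n : (forall i, 0 <= f i) -> (m <= n)%nat -> psum f m <= psum f n.
Proof. intros H Hmn; induction Hmn. lra. simpl. specialize (H m0). lra. Qed.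

Lemma psum_zero f n : (forall i, (i < n)%nat -> f i = 0) -> psum f n = 0.
Proof. intros H. rewrite (psum_ext f (fun _ => 0)) by auto. clear H. induction n; simpl; lra. Qed.

Lemma psum_plus f g n : psum (fun i => f i + g i) n = psum f n + psum g n.
Proof. induction n; simpl; lra. Qed.

Lemma psum_scal c f n : psum (fun i => c * f i) n = c * psum f n.
Proof. induction n; simpl. lra. rewrite IHn. lra. Qed.

Lemma psum_minus f g n : psum (fun i => f i - g i) n = psum f n - psum g n.
Proof. induction n; simpl; lra. Qed.

Lemma psum_abs f n : Rabs (psum f n) <= psum (fun i => Rabs (f i)) n.
Proof. induction n; simpl. rewrite Rabs_R0; lra.
  eapply Rle_trans. apply Rabs_triang. lra. Qed.

Definition cv (u : nat -> R) (l : R) : Prop :=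
  forall eps, eps > 0 -> exists N, forall n, (n >= N)%nat -> Rabs (u n - l) < eps.

Lemma inf_sum_cv f l : infinite_sum f l -> cv (psum f) l.
Proof.
  intros H eps Heps. destruct (H eps Heps) as [N HN]. exists (S N).
  intros n Hn. destruct n as [|n]. lia. rewrite <- sum_f_R0_psum. apply HN. lia.
Qed.

Lemma cv_inf_sum f l : cv (psum f) l -> infinite_sum f l.
Proof.
  intros H eps Heps. destruct (H eps Heps) as [N HN]. exists N.
  intros n Hn. unfold Rdist. rewrite sum_f_R0_psum. apply HN. lia.
Qed.

Lemma cv_unique u l1 l2 : cv u l1 -> cv u l2 -> l1 = l2.
Proof.
  intros H1 H2. destruct (Req_dec l1 l2) as [|Hne]; auto.
  set (e := Rabs (l1 - l2) / 2).
  assert (He : e > 0) by (unfold e; assert (Rabs (l1 - l2) > 0) by (apply Rabs_pos_lt; lra); lra).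
  destruct (H1 e He) as [N1 HN1]. destruct (H2 e He) as [N2 HN2].
  specialize (HN1 (N1 + N2)%nat ltac:(lia)). specialize (HN2 (N1 + N2)%nat ltac:(lia)).
  assert (Rabs (l1 - l2) <= Rabs (u (N1+N2)%nat - l1) + Rabs (u (N1+N2)%nat - l2)).
  { replace (l1 - l2) with (-(u (N1+N2)%nat - l1) + (u (N1+N2)%nat - l2)) by ring.
    eapply Rle_trans. apply Rabs_triang. rewrite Rabs_Ropp. lra. }
  unfold e in *. lra.
Qed.

Lemma cv_const c : cv (fun _ => c) c.
Proof. intros eps He. exists O. intros. replace (c - c) with 0 by ring. rewrite Rabs_R0. lra. Qed.

Lemma cv_plus u v a b : cv u a -> cv v b -> cv (fun n => u n + v n) (a + b).
Proof.
  intros Hu Hv eps He. destruct (Hu (eps/2) ltac:(lra)) as [N1 H1].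
  destruct (Hv (eps/2) ltac:(lra)) as [N2 H2]. exists (N1+N2)%nat. intros n Hn.
  specialize (H1 n ltac:(lia)). specialize (H2 n ltac:(lia)).
  replace (u n + v n - (a + b)) with ((u n - a) + (v n - b)) by ring.
  eapply Rle_lt_trans. apply Rabs_triang. lra.
Qed.

Lemma cv_scal c u a : cv u a -> cv (fun n => c * u n) (c * a).
Proof.
  intros Hu eps He. destruct (Req_dec c 0) as [Hc|Hc].
  - exists O. intros. subst. replace (0 * u n - 0 * a) with 0 by ring. rewrite Rabs_R0. lra.
  - assert (Hc' : Rabs c > 0) by (apply Rabs_pos_lt; auto).
    destruct (Hu (eps / Rabs c)) as [N HN]. apply Rdiv_lt_0_compat; lra.
    exists N. intros n Hn. specialize (HN n Hn).
    replace (c * u n - c * a) with (c * (u n - a)) by ring. rewrite Rabs_mult.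
    apply Rmult_lt_compat_l with (r := Rabs c) in HN; auto.
    replace (Rabs c * (eps / Rabs c)) with eps in HN by (field; lra). lra.
Qed.

Lemma cv_shift u a : cv u a -> cv (fun n => u (pred n)) a.
Proof. intros Hu eps He. destruct (Hu eps He) as [N HN]. exists (S N). intros n Hn. apply HN. lia. Qed.

Lemma cv_le_bound u v a : cv u a -> (forall n, 0 <= v n <= u n) -> a = 0 -> cv v 0.
Proof.
  intros Hu Hb Ha eps He. destruct (Hu eps He) as [N HN]. exists N. intros n Hn.
  specialize (HN n Hn). subst. specialize (Hb n). rewrite Rminus_0_r in *.
  rewrite Rabs_right in * by lra. lra.
Qed.

Lemma lim_le x y z X Y : cv x X -> cv y Y -> cv z 0 ->
  (exists N1, forall n, (n >= N1)%nat -> x n <= y n + z n) -> X <= Y.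
Proof.
  intros Hx Hy Hz [N1 H]. apply Rle_plus_epsilon. intros eps He.
  destruct (Hx (eps/3) ltac:(lra)) as [N2 H2].
  destruct (Hy (eps/3) ltac:(lra)) as [N3 H3].
  destruct (Hz (eps/3) ltac:(lra)) as [N4 H4].
  set (n := (N1 + N2 + N3 + N4)%nat).
  specialize (H n ltac:(unfold n; lia)). specialize (H2 n ltac:(unfold n; lia)).
  specialize (H3 n ltac:(unfold n; lia)). specialize (H4 n ltac:(unfold n; lia)).
  rewrite Rminus_0_r in H4.
  apply Rabs_def2 in H2. apply Rabs_def2 in H3. apply Rabs_def2 in H4. lra.
Qed.

Lemma inf_sum_terms f l : infinite_sum f l -> cv f 0.
Proof.
  intros H. apply inf_sum_cv in H. intros eps He.
  destruct (H (eps/2) ltac:(lra)) as [N HN]. exists N. intros n Hn.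
  specialize (HN n Hn) as A. specialize (HN (S n) ltac:(lia)) as B.
  rewrite psum_S in B. rewrite Rminus_0_r.
  apply Rabs_def2 in A. apply Rabs_def2 in B. apply Rabs_def1; lra.
Qed.

Lemma psum_le_lim f l : (forall i, 0 <= f i) -> infinite_sum f l -> forall n, psum f n <= l.
Proof.
  intros Hf H n. apply inf_sum_cv in H.
  apply (lim_le (fun _ => psum f n) (psum f) (fun _ => 0)); auto using cv_const.
  exists n. intros m Hm. pose proof (psum_mono f n m Hf Hm). lra.
Qed.

Lemma inf_sum_finite f N : (forall n, (n > N)%nat -> f n = 0) -> infinite_sum f (psum f (S N)).
Proof.
  intros H. apply cv_inf_sum. intros eps He. exists (S N). intros n Hn.
  assert (psum f n = psum f (S N)).
  { induction Hn. auto. rewrite psum_S, H by lia. lra. }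
  rewrite H0. replace (psum f (S N) - psum f (S N)) with 0 by ring. rewrite Rabs_R0. lra.
Qed.

Lemma inf_sum_scal c f l : infinite_sum f l -> infinite_sum (fun n => c * f n) (c * l).
Proof.
  intros H. apply cv_inf_sum. apply inf_sum_cv in H.
  assert (E: forall n, psum (fun n => c * f n) n = c * psum f n) by (intros; apply psum_scal).
  intros eps He. destruct (cv_scal c _ _ H eps He) as [N HN]. exists N. intros. rewrite E. auto.
Qed.

Lemma Rdiv_le_0_compat a b : 0 <= a -> 0 < b -> 0 <= a / b.
Proof. intros. unfold Rdiv. apply Rmult_le_pos; auto. left; apply Rinv_0_lt_compat; auto. Qed.

Lemma Rabs_le_between x a : Rabs x <= a -> -a <= x <= a.
Proof. intros H. unfold Rabs in H. destruct (Rcase_abs x); lra. Qed.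

Lemma Rabs_sub_le a b : Rabs (a - b) <= Rabs a + Rabs b.
Proof. unfold Rminus. eapply Rle_trans. apply Rabs_triang. rewrite Rabs_Ropp. lra. Qed.

Lemma abs_div_le x c B : 0 < c -> Rabs x <= B * c -> Rabs (x / c) <= B.
Proof.
  intros Hc H. apply Rabs_le_between in H. apply Rabs_le. unfold Rdiv. split.
  - apply Rmult_le_reg_r with c; auto. rewrite Rmult_assoc, Rinv_l by lra. lra.
  - apply Rmult_le_reg_r with c; auto. rewrite Rmult_assoc, Rinv_l by lra. lra.
Qed.

Lemma Rabs5 a b c d e : Rabs (a - b + c + d - e) <= Rabs a + Rabs b + Rabs c + Rabs d + Rabs e.
Proof.
  eapply Rle_trans. apply Rabs_sub_le. apply Rplus_le_compat_r.
  eapply Rle_trans. apply Rabs_triang. apply Rplus_le_compat_r.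
  eapply Rle_trans. apply Rabs_triang. apply Rplus_le_compat_r.
  apply Rabs_sub_le.
Qed.

Lemma psum_range_le f g a b : (a <= b)%nat -> (forall i, (a <= i < b)%nat -> f i <= g i) ->
  psum f b - psum f a <= psum g b - psum g a.
Proof.
  intros Hab H. induction Hab. lra.
  rewrite !psum_S. assert (f m <= g m) by (apply H; lia).
  assert (psum f m - psum f a <= psum g m - psum g a) by (apply IHHab; intros; apply H; lia). lra.
Qed.

Lemma poi_pos lam j : 0 < lam -> 0 < poi_pmf lam j.
Proof.
  intros H. unfold poi_pmf. apply Rdiv_lt_0_compat. apply Rmult_lt_0_compat.
  apply exp_pos. apply pow_lt; auto. apply INR_fact_lt_0.
Qed.

Lemma poi_rec lam j : INR (S j) * poi_pmf lam (S j) = lam * poi_pmf lam j.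
Proof.
  unfold poi_pmf. rewrite fact_simpl, mult_INR. simpl pow.
  pose proof (INR_fact_lt_0 j). assert (INR (S j) > 0) by (apply lt_0_INR; lia).
  field. lra.
Qed.

Lemma poi_sum lam : infinite_sum (poi_pmf lam) 1.
Proof.
  pose proof (proj2_sig (exist_exp lam)) as H. fold (exp lam) in H. unfold exp_in in H.
  apply (inf_sum_scal (exp (- lam))) in H.
  replace (exp (-lam) * exp lam) with 1 in H by (rewrite <- exp_plus; replace (-lam+lam) with 0 by ring; symmetry; apply exp_0).
  intros eps He. destruct (H eps He) as [N HN]. exists N. intros n Hn.
  rewrite (sum_eq _ (fun i => exp (- lam) * (/ INR (fact i) * lam ^ i))). auto.
  intros. unfold poi_pmf. field. pose proof (INR_fact_lt_0 i). lra.
Qed.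

Lemma poi_tail_S lam j : poi_tail lam j = poi_pmf lam j + poi_tail lam (S j).
Proof. unfold poi_tail. rewrite psum_S. ring. Qed.

Lemma poi_psum_le1 lam n : 0 < lam -> psum (poi_pmf lam) n <= 1.
Proof. intros H. apply psum_le_lim. intros; left; apply poi_pos; auto. apply poi_sum. Qed.

Lemma poi_tail_ge lam j : 0 < lam -> poi_pmf lam j <= poi_tail lam j.
Proof. intros H. unfold poi_tail. pose proof (poi_psum_le1 lam (S j) H). rewrite psum_S in H0. lra. Qed.

Lemma poi_mean_psum lam N : psum (fun i => INR i * poi_pmf lam i) (S N) = lam * psum (poi_pmf lam) N.
Proof.
  induction N. simpl. ring.
  rewrite psum_S, IHN, poi_rec. rewrite (psum_S (poi_pmf lam)). ring.
Qed.

Lemma poi_tail_bound lam m : 0 < lam ->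
  (INR (S m) - lam) * poi_tail lam (S m) <= lam * poi_pmf lam m.
Proof.
  intros Hl. set (pi := poi_pmf lam).
  assert (Hpos : forall i, 0 <= pi i) by (intros; left; apply poi_pos; auto).
  apply (lim_le (fun N => (INR (S m) - lam) * (psum pi (S N) - psum pi (S m))) (fun _ => lam * pi m) (fun _ => 0)).
  - apply cv_scal. unfold poi_tail. fold pi.
    pose proof (inf_sum_cv _ _ (poi_sum lam)) as H. fold pi in H.
    intros eps He. destruct (H eps He) as [N HN]. exists N. intros n Hn.
    replace (psum pi (S n) - psum pi (S m) - (1 - psum pi (S m))) with (psum pi (S n) - 1) by ring. apply HN. lia.
  - apply cv_const.
  - apply cv_const.
  - exists (S m). intros N HN.
    assert (A : (INR (S m)) * (psum pi (S N) - psum pi (S m)) <=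
                psum (fun i => INR i * pi i) (S N) - psum (fun i => INR i * pi i) (S m)).
    { rewrite Rmult_minus_distr_l, <- (psum_scal (INR (S m)) pi (S N)), <- (psum_scal (INR (S m)) pi (S m)).
      apply psum_range_le. lia. intros i Hi. apply Rmult_le_compat_r. auto. apply le_INR. lia. }
    unfold pi in A. rewrite !poi_mean_psum in A. fold pi in A.
    assert (psum pi N <= psum pi (S N)) by (rewrite psum_S; specialize (Hpos N); lra).
    assert (psum pi (S m) = psum pi m + pi m) by apply psum_S. rewrite Rmult_minus_distr_r. nra.
Qed.

Definition supp (p : nat -> nat -> R) : Prop :=
  forall n m, p n m <> 0 -> (m = n \/ m = S n \/ m = S (S n)).

Lemma supp_zero p n m : supp p -> m <> n -> m <> S n -> m <> S (S n) -> p n m = 0.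
Proof. intros H a b c. destruct (Req_dec (p n m) 0); auto. destruct (H n m); auto; intuition. Qed.

Lemma q_decomp p pW : supp p -> (forall n, infinite_sum (fun m => p n m) (pW n)) ->
  forall n, pW n = p n n + p n (S n) + p n (S (S n)).
Proof.
  intros Hs Hq n.
  assert (H1 : infinite_sum (fun m => p n m) (psum (fun m => p n m) (S (S (S n))))).
  { apply inf_sum_finite. intros m Hm. apply supp_zero; auto; lia. }
  rewrite (uniqueness_sum _ _ _ (Hq n) H1). rewrite !psum_S.
  rewrite psum_zero. ring. intros i Hi. apply supp_zero; auto; lia.
Qed.

Definition wsd (p : nat -> nat -> R) (m : nat) : R :=
  p m m + (match m with O => 0 | S m' => p m' m end) + (match m with S (S m'') => p m'' m | _ => 0 end).

Lemma ws_decomp p pWs : supp p -> (forall m, infinite_sum (fun n => p n m) (pWs m)) ->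
  forall m, pWs m = wsd p m.
Proof.
  intros Hs Hq m.
  assert (H1 : infinite_sum (fun n => p n m) (psum (fun n => p n m) (S m))).
  { apply inf_sum_finite. intros n Hn. apply supp_zero; auto; lia. }
  rewrite (uniqueness_sum _ _ _ (Hq m) H1). unfold wsd.
  destruct m as [|[|m]].
  - simpl. ring.
  - simpl. ring.
  - rewrite !psum_S. rewrite psum_zero. ring. intros i Hi. apply supp_zero; auto; lia.
Qed.

Definition ind (m n : nat) : R := if Nat.eq_dec n m then 1 else 0.

Lemma sb_point pW pWs lam : size_biased pW pWs lam ->
  forall m, INR m * pW m = lam * pWs m.
Proof.
  intros Hsb m.
  assert (Hfin : forall h : nat -> R, infinite_sum (fun n => h n * ind m n) (h m)).
  { intros h. replace (h m) with (psum (fun n => h n * ind m n) (S m)).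
    apply inf_sum_finite. intros n Hn. unfold ind. destruct (Nat.eq_dec n m). lia. ring.
    rewrite psum_S, psum_zero. unfold ind. destruct (Nat.eq_dec m m); [ring|lia].
    intros i Hi. unfold ind. destruct (Nat.eq_dec i m). lia. ring. }
  assert (A : infinite_sum (fun n => INR n * ind m n * pW n) (INR m * pW m)).
  { pose proof (Hfin (fun n => INR n * pW n)) as X. intros eps He. destruct (X eps He) as [N HN].
    exists N. intros n Hn. rewrite (sum_eq _ (fun n0 => INR n0 * pW n0 * ind m n0)). auto. intros; ring. }
  assert (B : infinite_sum (fun n => ind m n * pWs n) (pWs m)).
  { pose proof (Hfin pWs) as X. intros eps He. destruct (X eps He) as [N HN].
    exists N. intros n Hn. rewrite (sum_eq _ (fun n0 => pWs n0 * ind m n0)). auto. intros; ring. }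
  apply (Hsb (ind m)); auto.
  - exists (Rabs (INR m * pW m)). pose proof (Hfin (fun n => Rabs (INR n * pW n))) as X.
    intros eps He. destruct (X eps He) as [N HN]. exists N. intros n Hn.
    rewrite (sum_eq _ (fun n0 => Rabs (INR n0 * pW n0) * ind m n0)). auto.
    intros. unfold ind. destruct (Nat.eq_dec i m). rewrite Rmult_1_r; f_equal; ring.
    rewrite Rmult_0_r, Rmult_0_r, Rmult_0_l, Rabs_R0. ring.
  - exists (Rabs (pWs m)). pose proof (Hfin (fun n => Rabs (pWs n))) as X.
    intros eps He. destruct (X eps He) as [N HN]. exists N. intros n Hn.
    rewrite (sum_eq _ (fun n0 => Rabs (pWs n0) * ind m n0)). auto.
    intros. unfold ind. destruct (Nat.eq_dec i m). rewrite Rmult_1_r, Rmult_1_l; auto.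
    rewrite Rmult_0_r, Rmult_0_l, Rabs_R0. ring.
Qed.

Record Core (q g : nat -> R) (lam d1 d2 : R) : Prop := {
  c_lam : 0 < lam; c_d1 : 0 <= d1; c_d2 : 0 <= d2;
  c_qnn : forall n, 0 <= q n;
  c_qsum : infinite_sum q 1;
  c_qmean : infinite_sum (fun n => INR n * q n) lam;
  c_E : forall m, INR (S m) * q (S m) = lam * (q m + g (S m) - g m);
  c_gle : forall n, g n <= d2 * INR n * q n;
  c_gge : forall n, - (d1 * q (pred n)) <= g n;
  c_g0 : g 0%nat = 0;
  c_s : forall n, 0 <= q n - g n }.

Definition RR lam N := poi_tail lam (S N) / poi_pmf lam N.

Fixpoint LL (lam : R) (n : nat) : R :=
  match n with O => 1 | S n' => 1 + INR (S n') / lam * LL lam n' end.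

Lemma Pi_nonneg lam j : 0 < lam -> 0 <= poi_tail lam j.
Proof. intros H. pose proof (poi_tail_ge lam j H). pose proof (poi_pos lam j H). lra. Qed.

Lemma RR_nonneg lam N : 0 < lam -> 0 <= RR lam N.
Proof. intros H. unfold RR. apply Rdiv_le_0_compat. apply Pi_nonneg; auto. apply poi_pos; auto. Qed.

Lemma RR_rec lam N : 0 < lam -> RR lam N = lam / INR (S N) * (1 + RR lam (S N)).
Proof.
  intros H. unfold RR. rewrite (poi_tail_S lam (S N)).
  pose proof (poi_rec lam N). pose proof (poi_pos lam N H). pose proof (poi_pos lam (S N) H).
  assert (INR (S N) > 0) by (apply lt_0_INR; lia).
  assert (E: poi_pmf lam (S N) = lam * poi_pmf lam N / INR (S N)) by (apply (Rmult_eq_reg_l (INR (S N))); [rewrite H0; field; lra | lra]).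
  rewrite E. field. split; lra.
Qed.

Lemma RR_bound lam N : 0 < lam -> (INR (S N) - lam) * RR lam N <= lam.
Proof.
  intros H. unfold RR. pose proof (poi_tail_bound lam N H). pose proof (poi_pos lam N H).
  unfold Rdiv. rewrite <- Rmult_assoc. apply Rmult_le_reg_r with (poi_pmf lam N); auto.
  rewrite Rmult_assoc, Rinv_l by lra. lra.
Qed.

Lemma delta_bound lam m : 0 < lam -> lam <= INR (S m) -> Rabs (RR lam m - RR lam (S m)) <= 1.
Proof.
  intros H Hm. rewrite (RR_rec lam m H). pose proof (RR_bound lam (S m) H).
  pose proof (RR_nonneg lam (S m) H). set (r := RR lam (S m)) in *.
  assert (HS : INR (S m) > 0) by (apply lt_0_INR; lia).
  rewrite S_INR in H0. set (s := INR (S m)) in *.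
  assert (Hl : lam / s <= 1) by (apply Rmult_le_reg_r with s; auto; unfold Rdiv; rewrite Rmult_assoc, Rinv_l; lra).
  replace (lam / s * (1 + r) - r) with (lam / s - (s - lam) / s * r) by (field; lra).
  assert (A : (s - lam) * r <= s) by nra.
  assert (B : (s - lam) / s * r <= 1).
  { unfold Rdiv. replace ((s - lam) * / s * r) with ((s - lam) * r * / s) by ring.
    apply Rmult_le_reg_r with s; auto. rewrite Rmult_assoc, Rinv_l; lra. }
  assert (B2 : 0 <= (s - lam) / s * r) by (apply Rmult_le_pos; auto; apply Rdiv_le_0_compat; lra).
  assert (0 <= lam / s) by (apply Rdiv_le_0_compat; lra).
  apply Rabs_le; lra.
Qed.

Lemma Pi_S_bound lam j : 0 < lam -> INR j * poi_tail lam (S j) <= lam * poi_tail lam j.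
Proof.
  intros H. pose proof (poi_tail_bound lam j H). rewrite (poi_tail_S lam j).
  pose proof (Pi_nonneg lam (S j) H). rewrite S_INR in H0. nra.
Qed.

Definition Dl lam (g : nat -> R) m := (RR lam (pred m) - RR lam m) * g m.

Lemma RI_ident q g lam d1 d2 (C : Core q g lam d1 d2) k N : (k <= N)%nat ->
  psum q (S N) - psum q k = q k + RR lam k * (q k - g k)
     + (psum (Dl lam g) (S N) - psum (Dl lam g) (S k)) - RR lam N * (q N - g N).
Proof.
  pose proof (c_lam _ _ _ _ _ C) as Hl.
  intros H. induction H.
  - rewrite psum_S. ring.
  - rewrite (psum_S q (S m)), (psum_S (Dl lam g) (S m)). replace (Dl lam g (S m)) with ((RR lam m - RR lam (S m)) * g (S m)) by reflexivity.
    assert (E := c_E _ _ _ _ _ C m).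
    assert (HS : INR (S m) > 0) by (apply lt_0_INR; lia).
    rewrite (RR_rec lam m Hl) in *.
    set (r := RR lam (S m)) in *.
    assert (X : lam / INR (S m) * (1 + r) * (q m - g m) =
      lam / INR (S m) * (1 + r) * (q m + g (S m) - g m) - lam / INR (S m) * (1 + r) * g (S m)) by ring.
    replace (lam / INR (S m) * (1 + r) * (q m + g (S m) - g m)) with ((1 + r) * (lam * (q m + g (S m) - g m)) / INR (S m)) in X by (field; lra).
    rewrite <- E in X. replace ((1 + r) * (INR (S m) * q (S m)) / INR (S m)) with ((1+r) * q (S m)) in X by (field; lra).
    lra.
Qed.

Lemma T_ident q g lam d1 d2 (C : Core q g lam d1 d2) k N : (k <= N)%nat ->
  psum (fun m => INR m * q m) (S N) - psum (fun m => INR m * q m) (S k)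
   = lam * (psum q N - psum q k + g N - g k).
Proof.
  intros H. induction H. ring.
  rewrite (psum_S _ (S m)), (psum_S q m). rewrite (c_E _ _ _ _ _ C m). lra.
Qed.

Lemma g_abs q g lam d1 d2 (C : Core q g lam d1 d2) n :
  Rabs (g n) <= d2 * INR n * q n + d1 * q (pred n).
Proof.
  pose proof (c_gle _ _ _ _ _ C n). pose proof (c_gge _ _ _ _ _ C n).
  pose proof (c_qnn _ _ _ _ _ C n). pose proof (c_qnn _ _ _ _ _ C (pred n)).
  pose proof (c_d1 _ _ _ _ _ C). pose proof (c_d2 _ _ _ _ _ C). pose proof (pos_INR n).
  assert (0 <= d2 * INR n * q n) by (apply Rmult_le_pos; auto; apply Rmult_le_pos; auto).
  assert (0 <= d1 * q (pred n)) by (apply Rmult_le_pos; auto).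
  apply Rabs_le; lra.
Qed.

Lemma q_le1 q g lam d1 d2 (C : Core q g lam d1 d2) n : psum q n <= 1.
Proof. apply psum_le_lim. apply (c_qnn _ _ _ _ _ C). apply (c_qsum _ _ _ _ _ C). Qed.

Lemma cv_psumS f l : infinite_sum f l -> cv (fun N => psum f (S N)) l.
Proof. intros H eps He. destruct (H eps He) as [N HN]. exists N. intros n Hn. rewrite <- sum_f_R0_psum. apply HN. auto. Qed.

Lemma psum_range_abs f g a b : (a <= b)%nat -> (forall i, (a <= i < b)%nat -> Rabs (f i) <= g i) ->
  Rabs (psum f b - psum f a) <= psum g b - psum g a.
Proof.
  intros Hab H. induction Hab. replace (psum f a - psum f a) with 0 by ring. rewrite Rabs_R0. lra.
  rewrite !psum_S. assert (Rabs (f m) <= g m) by (apply H; lia).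
  assert (Rabs (psum f m - psum f a) <= psum g m - psum g a) by (apply IHHab; intros; apply H; lia).
  replace (psum f m + f m - psum f a) with ((psum f m - psum f a) + f m) by ring.
  eapply Rle_trans. apply Rabs_triang. lra.
Qed.

Lemma psum_pred f n : psum (fun m => f (pred m)) (S n) = f 0%nat + psum f n.
Proof. induction n. simpl. ring. rewrite psum_S, IHn. simpl. ring. Qed.

Lemma RI q g lam d1 d2 (C : Core q g lam d1 d2) k : lam <= INR k ->
  Rabs ((1 - psum q k) - q k - RR lam k * (q k - g k)) <=
     (d1 + d2 * lam) * (1 - psum q k) + d2 * lam * d1 * q (pred k).
Proof.
  intros Hk.
  pose proof (c_lam _ _ _ _ _ C) as Hl. pose proof (c_d1 _ _ _ _ _ C) as Hd1.
  pose proof (c_d2 _ _ _ _ _ C) as Hd2. pose proof (c_qnn _ _ _ _ _ C) as Hq.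
  set (A := q k + RR lam k * (q k - g k)).
  set (SN := fun N => psum q (S N) - psum q k).
  set (eps := d1 + d2 * lam).
  set (z := fun N => d2 * d2 * lam * (INR N * q N) + (q N + d1 * q (pred N))).
  assert (Hcs : cv SN (1 - psum q k)).
  { unfold SN. pose proof (cv_psumS _ _ (c_qsum _ _ _ _ _ C)) as X.
    pose proof (cv_plus _ _ _ _ X (cv_const (- psum q k))) as Y. simpl in Y.
    intros e He. destruct (Y e He) as [N HN]. exists N. intros n Hn. specialize (HN n Hn).
    replace (psum q (S n) - psum q k - (1 - psum q k)) with (psum q (S n) + - psum q k - (1 + - psum q k)) by ring. auto. }
  assert (Hz : cv z 0).
  { unfold z. replace 0 with (d2 * d2 * lam * 0 + (0 + d1 * 0)) by ring.
    apply cv_plus. apply cv_scal. apply (inf_sum_terms _ _ (c_qmean _ _ _ _ _ C)).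
    pose proof (inf_sum_terms _ _ (c_qsum _ _ _ _ _ C)) as X.
    apply cv_plus. auto. apply cv_scal. apply cv_shift. auto. }
  assert (HN1 : exists N1, INR N1 >= 2 * lam /\ (N1 >= k)%nat).
  { destruct (INR_unbounded (2 * lam)) as [n Hn]. exists (n + k)%nat. split; [|lia].
    rewrite plus_INR. pose proof (pos_INR k). lra. }
  destruct HN1 as [N1 [HN1a HN1b]].
  assert (KEY : forall N, (N >= N1)%nat ->
     Rabs (SN N - A) <= eps * SN N + d2 * lam * d1 * q (pred k) + z N).
  { intros N HN. assert (HkN : (k <= N)%nat) by lia.
    unfold SN, A. pose proof (RI_ident _ _ _ _ _ C k N HkN) as EQ.
    set (D := psum (Dl lam g) (S N) - psum (Dl lam g) (S k)) in *.
    assert (HD : Rabs D <= psum (fun m => d2 * INR m * q m + d1 * q (pred m)) (S N)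
                        - psum (fun m => d2 * INR m * q m + d1 * q (pred m)) (S k)).
    { unfold D. apply psum_range_abs. lia. intros i Hi. destruct i as [|m]. lia.
      unfold Dl. simpl pred. rewrite Rabs_mult.
      assert (Rabs (RR lam m - RR lam (S m)) <= 1).
      { apply delta_bound; auto. apply Rle_trans with (INR k); auto. apply le_INR; lia. }
      pose proof (g_abs _ _ _ _ _ C (S m)). pose proof (Rabs_pos (g (S m))).
      simpl pred in *. eapply Rle_trans. apply Rmult_le_compat_r. apply Rabs_pos. apply H. lra. }
    rewrite psum_plus, psum_plus in HD.
    assert (E1 : psum (fun m => d2 * INR m * q m) (S N) - psum (fun m => d2 * INR m * q m) (S k)
        = d2 * (lam * (psum q N - psum q k + g N - g k))).
    { rewrite <- (T_ident _ _ _ _ _ C k N HkN).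
      assert (Z : forall n, psum (fun m => d2 * INR m * q m) n = d2 * psum (fun m => INR m * q m) n).
      { intros n. rewrite <- psum_scal. apply psum_ext; intros; ring. }
      rewrite !Z. ring. }
    assert (E2 : psum (fun m => d1 * q (pred m)) (S N) - psum (fun m => d1 * q (pred m)) (S k)
        = d1 * (psum q N - psum q k)).
    { rewrite !(psum_scal d1 (fun m => q (pred m))). rewrite !psum_pred. ring. }
    assert (HgN := c_gle _ _ _ _ _ C N). assert (Hgk := c_gge _ _ _ _ _ C k).
    assert (HsN := c_s _ _ _ _ _ C N). assert (HgN' := c_gge _ _ _ _ _ C N).
    assert (HqNN : psum q N - psum q k <= psum q (S N) - psum q k) by (rewrite psum_S; specialize (Hq N); lra).
    assert (Hpk : psum q k <= psum q N) by (apply psum_mono; auto).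
    assert (HRR : RR lam N <= 1).
    { pose proof (RR_bound lam N Hl). rewrite S_INR in H. pose proof (RR_nonneg lam N Hl).
      assert (INR N >= 2 * lam) by (pose proof (le_INR N1 N HN); lra).
      destruct (Rle_dec (RR lam N) 1) as [|Hc]; auto. exfalso.
      assert ((INR N + 1 - lam) * 1 < (INR N + 1 - lam) * RR lam N) by (apply Rmult_lt_compat_l; lra). lra. }
    assert (HRR0 := RR_nonneg lam N Hl).
    assert (HR1 : 0 <= RR lam N * (q N - g N) <= q N + d1 * q (pred N)) by (split; nra).
    unfold z, eps. apply Rabs_le.
    assert (Rabs D <= d2 * lam * (psum q (S N) - psum q k) + d2 * d2 * lam * (INR N * q N)
                      + d2 * lam * d1 * q (pred k) + d1 * (psum q (S N) - psum q k)).
    { assert (d2 * (lam * (psum q N - psum q k + g N - g k)) <=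
         d2 * lam * (psum q (S N) - psum q k) + d2 * d2 * lam * (INR N * q N) + d2 * lam * d1 * q (pred k)).
      { assert (lam * (psum q N - psum q k + g N - g k) <= lam * (psum q (S N) - psum q k + d2 * INR N * q N + d1 * q (pred k))).
        apply Rmult_le_compat_l; lra. apply Rmult_le_compat_l with (r := d2) in H; auto.
        eapply Rle_trans. apply H. right; ring. }
      assert (d1 * (psum q N - psum q k) <= d1 * (psum q (S N) - psum q k)) by (apply Rmult_le_compat_l; lra).
      lra. }
    apply Rabs_le_between in H. split; nra. }
  apply Rabs_le. split.
  - assert (X : A - (1 - psum q k) <= eps * (1 - psum q k) + d2 * lam * d1 * q (pred k)).
    { apply (lim_le (fun N => A - SN N) (fun N => eps * SN N + d2 * lam * d1 * q (pred k)) z); auto.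
      intros e He. destruct (Hcs e He) as [M HM]. exists M. intros n Hn. specialize (HM n Hn).
      replace (A - SN n - (A - (1 - psum q k))) with (-(SN n - (1 - psum q k))) by ring. rewrite Rabs_Ropp; auto.
      apply cv_plus. apply cv_scal; auto. apply cv_const.
      exists N1. intros N HN. specialize (KEY N HN). apply Rabs_le_between in KEY. lra. }
    unfold A in X. fold eps. lra.
  - assert (X : (1 - psum q k) - A <= eps * (1 - psum q k) + d2 * lam * d1 * q (pred k)).
    { apply (lim_le (fun N => SN N - A) (fun N => eps * SN N + d2 * lam * d1 * q (pred k)) z); auto.
      intros e He. destruct (Hcs e He) as [M HM]. exists M. intros n Hn. specialize (HM n Hn).
      replace (SN n - A - (1 - psum q k - A)) with (SN n - (1 - psum q k)) by ring. auto.
      apply cv_plus. apply cv_scal; auto. apply cv_const.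
      exists N1. intros N HN. specialize (KEY N HN). apply Rabs_le_between in KEY. lra. }
    unfold A in X. fold eps. lra.
Qed.


Definition Fl lam (g : nat -> R) m := (LL lam m - LL lam (pred m)) * g m.

Lemma LL_S lam n : LL lam (S n) = 1 + INR (S n) / lam * LL lam n.
Proof. reflexivity. Qed.

Lemma LI_ident q g lam d1 d2 (C : Core q g lam d1 d2) n :
  psum q (S n) = LL lam n * (q n - g n) + psum (Fl lam g) (S n).
Proof.
  pose proof (c_lam _ _ _ _ _ C) as Hl.
  induction n.
  - simpl. unfold Fl. simpl. rewrite (c_g0 _ _ _ _ _ C). ring.
  - rewrite (psum_S q (S n)), (psum_S (Fl lam g) (S n)), IHn.
    replace (Fl lam g (S n)) with ((LL lam (S n) - LL lam n) * g (S n)) by reflexivity.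
    assert (E := c_E _ _ _ _ _ C n).
    replace (LL lam (S n)) with (1 + INR (S n) / lam * LL lam n) by reflexivity.
    assert (X : LL lam n * (q n - g n) = LL lam n * (q n + g (S n) - g n) - LL lam n * g (S n)) by ring.
    replace (LL lam n * (q n + g (S n) - g n)) with (LL lam n * (lam * (q n + g (S n) - g n)) / lam) in X by (field; lra).
    rewrite <- E in X. replace (LL lam n * (INR (S n) * q (S n)) / lam) with (INR (S n) / lam * LL lam n * q (S n)) in X by (field; lra).
    lra.
Qed.

Lemma LI_poi lam n : 0 < lam -> psum (poi_pmf lam) (S n) = LL lam n * poi_pmf lam n.
Proof.
  intros Hl. induction n. simpl. ring.
  rewrite psum_S, IHn. replace (LL lam (S n)) with (1 + INR (S n) / lam * LL lam n) by reflexivity.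
  pose proof (poi_rec lam n). rewrite Rmult_plus_distr_r.
  replace (INR (S n) / lam * LL lam n * poi_pmf lam (S n)) with (LL lam n * (INR (S n) * poi_pmf lam (S n)) / lam) by (field; lra).
  rewrite H. field. lra.
Qed.

Lemma LL_ge1 lam n : 0 < lam -> 1 <= LL lam n.
Proof.
  intros Hl. induction n. simpl; lra. rewrite LL_S.
  assert (0 <= INR (S n) / lam) by (apply Rdiv_le_0_compat; [apply pos_INR|lra]).
  nra.
Qed.

Lemma LL_up lam n : 0 < lam -> INR n < lam -> LL lam n <= lam / (lam - INR n).
Proof.
  intros Hl. induction n; intros Hn.
  - simpl. simpl in Hn. replace (lam / (lam - 0)) with 1 by (field; lra). lra.
  - rewrite S_INR in Hn. assert (IH := IHn ltac:(lra)).
    rewrite LL_S. rewrite S_INR.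
    assert (0 <= (INR n + 1) / lam) by (apply Rdiv_le_0_compat; [pose proof (pos_INR n); lra|lra]).
    assert (A : (INR n + 1) / lam * LL lam n <= (INR n + 1) / lam * (lam / (lam - INR n))) by (apply Rmult_le_compat_l; auto).
    replace ((INR n + 1) / lam * (lam / (lam - INR n))) with ((INR n + 1) / (lam - INR n)) in A by (field; lra).
    assert (B : 1 + (INR n + 1) / (lam - INR n) <= lam / (lam - (INR n + 1))).
    { replace (1 + (INR n + 1) / (lam - INR n)) with ((lam + 1) / (lam - INR n)) by (field; lra).
      apply Rmult_le_reg_r with ((lam - INR n) * (lam - (INR n + 1))). apply Rmult_lt_0_compat; lra.
      replace ((lam + 1) / (lam - INR n) * ((lam - INR n) * (lam - (INR n + 1)))) with ((lam + 1) * (lam - (INR n + 1))) by (field; lra).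
      replace (lam / (lam - (INR n + 1)) * ((lam - INR n) * (lam - (INR n + 1)))) with (lam * (lam - INR n)) by (field; lra).
      pose proof (pos_INR n). nra. }
    lra.
Qed.

Lemma LL_delta lam m : 0 < lam -> INR (S m) < lam -> 0 <= LL lam (S m) - LL lam m <= 1.
Proof.
  intros Hl Hm. rewrite LL_S. rewrite S_INR in *.
  assert (U := LL_up lam m Hl ltac:(lra)). assert (G := LL_ge1 lam m Hl).
  replace (1 + (INR m + 1) / lam * LL lam m - LL lam m) with (1 - (lam - (INR m + 1)) / lam * LL lam m) by (field; lra).
  assert (0 <= (lam - (INR m + 1)) / lam) by (apply Rdiv_le_0_compat; lra).
  assert (A : (lam - (INR m + 1)) / lam * LL lam m <= (lam - (INR m + 1)) / lam * (lam / (lam - INR m))) by (apply Rmult_le_compat_l; auto).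
  replace ((lam - (INR m + 1)) / lam * (lam / (lam - INR m))) with ((lam - (INR m + 1)) / (lam - INR m)) in A by (field; lra).
  assert ((lam - (INR m + 1)) / (lam - INR m) <= 1).
  { apply Rmult_le_reg_r with (lam - INR m). lra. unfold Rdiv. rewrite Rmult_assoc, Rinv_l; lra. }
  split. lra. assert (0 <= (lam - (INR m + 1)) / lam * LL lam m) by (apply Rmult_le_pos; lra). lra.
Qed.

Lemma Fl_abs lam g m : 0 < lam -> g 0%nat = 0 -> INR m < lam -> Rabs (Fl lam g m) <= Rabs (g m).
Proof.
  intros Hl Hg Hm. unfold Fl. destruct m as [|m].
  - simpl. rewrite Hg. rewrite Rmult_0_r, Rabs_R0. lra.
  - simpl pred. rewrite Rabs_mult. pose proof (LL_delta lam m Hl Hm).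
    rewrite Rabs_right by lra. pose proof (Rabs_pos (g (S m))). nra.
Qed.

Fixpoint mx (f : nat -> R) (lo n : nat) : R :=
  match n with O => f lo | S n' => Rmax (mx f lo n') (f (lo + S n')%nat) end.

Lemma mx_ge f lo n i : (lo <= i <= lo + n)%nat -> f i <= mx f lo n.
Proof.
  induction n; intros Hi; simpl.
  - replace i with lo by lia. lra.
  - destruct (Nat.eq_dec i (lo + S n)) as [->|Hne]. apply Rmax_r.
    eapply Rle_trans. apply IHn. lia. apply Rmax_l.
Qed.

Lemma mx_att f lo n : exists i, (lo <= i <= lo + n)%nat /\ mx f lo n = f i.
Proof.
  induction n; simpl.
  - exists lo. split. lia. auto.
  - destruct IHn as [i [Hi E]]. unfold Rmax. destruct (Rle_dec (mx f lo n) (f (lo + S n)%nat)).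
    exists (lo + S n)%nat. split; [lia|auto]. exists i. split; [lia|auto].
Qed.

Lemma exists_ceil x : 0 < x -> exists j, (1 <= j)%nat /\ INR (j - 1) < x /\ x <= INR j.
Proof.
  intros Hx. destruct (INR_unbounded x) as [n Hn].
  assert (P : forall n, x <= INR n -> exists j, (1 <= j)%nat /\ INR (j - 1) < x /\ x <= INR j).
  { induction n0; intros H. simpl in H. lra.
    destruct (Rle_dec x (INR n0)) as [H'|H']. auto.
    exists (S n0). split. lia. replace (S n0 - 1)%nat with n0 by lia. split; lra. }
  apply (P n). lra.
Qed.

Definition hh lam (q : nat -> R) i := q i / poi_pmf lam i.

Lemma hstep q g lam d1 d2 (C : Core q g lam d1 d2) m :
  hh lam q (S m) - hh lam q m = (g (S m) - g m) / poi_pmf lam m.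
Proof.
  pose proof (c_lam _ _ _ _ _ C) as Hl. unfold hh.
  pose proof (c_E _ _ _ _ _ C m) as E. pose proof (poi_rec lam m) as P.
  pose proof (poi_pos lam m Hl). pose proof (poi_pos lam (S m) Hl).
  assert (INR (S m) > 0) by (apply lt_0_INR; lia).
  assert (q (S m) / poi_pmf lam (S m) = (INR (S m) * q (S m)) / (INR (S m) * poi_pmf lam (S m))) by (field; lra).
  rewrite H2, E, P. field. lra.
Qed.

Lemma ku_bound lam k : 0 < lam -> lam <= INR k -> (1 <= k)%nat ->
  INR k / lam <= 2 + 2 * ((INR k - lam)^2 / lam).
Proof.
  intros Hl Hk Hk1. assert (Hk1' : 1 <= INR k) by (apply (le_INR 1 k); auto).
  replace (INR k / lam) with (1 + (INR k - lam) / lam) by (field; lra).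
  assert ((INR k - lam) / lam <= 1 + 2 * ((INR k - lam) ^ 2 / lam)).
  { destruct (Rle_dec (1/2) (INR k - lam)).
    - assert (INR k - lam <= 2 * (INR k - lam)^2) by nra.
      assert ((INR k - lam) / lam <= 2 * (INR k - lam)^2 / lam).
      { unfold Rdiv. apply Rmult_le_compat_r. left; apply Rinv_0_lt_compat; lra. lra. }
      assert (0 <= (INR k - lam) ^ 2 / lam) by (apply Rdiv_le_0_compat; [nra|lra]).
      unfold Rdiv in *. lra.
    - assert ((INR k - lam) / lam <= 1).
      { apply Rmult_le_reg_r with lam; auto. unfold Rdiv. rewrite Rmult_assoc, Rinv_l; lra. }
      assert (0 <= (INR k - lam) ^ 2 / lam) by (apply Rdiv_le_0_compat; [nra|lra]). lra. }
  lra.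
Qed.

Lemma main_core q g lam d1 d2 (C : Core q g lam d1 d2) k :
  lam <= INR k ->
  (d1 + d2 * lam) * (1 + (INR k - lam)^2 / lam) <= 1/44 ->
  Rabs ((1 - psum q k) / poi_tail lam k - 1) <= 32 * ((d1 + d2 * lam) * (1 + (INR k - lam)^2 / lam)).
Proof.
  intros Hk Hu.
  pose proof (c_lam _ _ _ _ _ C) as Hl. pose proof (c_d1 _ _ _ _ _ C) as Hd1.
  pose proof (c_d2 _ _ _ _ _ C) as Hd2. pose proof (c_qnn _ _ _ _ _ C) as Hq.
  assert (Hk1 : (1 <= k)%nat). { destruct k. simpl in Hk. lra. lia. }
  pose proof (ku_bound lam k Hl Hk Hk1) as Hku.
  set (eps := d1 + d2 * lam) in *.
  set (xi2 := (INR k - lam)^2 / lam) in *.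
  set (u := eps * (1 + xi2)) in *.
  assert (Heps0 : 0 <= eps) by (unfold eps; nra).
  assert (Hxi0 : 0 <= xi2) by (unfold xi2; apply Rdiv_le_0_compat; [nra|lra]).
  assert (Hepsu : eps <= u) by (unfold u; nra).
  assert (Hd2l : d2 * lam <= eps) by (unfold eps; lra).
  assert (Hd1e : d1 <= eps) by (unfold eps; nra).
  assert (Fku : eps * (INR k / lam) <= 2 * u) by (unfold u; nra).
  assert (Fxi : eps * xi2 <= u) by (unfold u; nra).
  set (pi := poi_pmf lam) in *. set (Pi := poi_tail lam) in *.
  assert (Hpi : forall i, 0 < pi i) by (intros; apply poi_pos; auto).
  set (h := hh lam q) in *.
  assert (qeq : forall i, q i = h i * pi i).
  { intros i. unfold h, hh. fold pi. field. specialize (Hpi i). lra. }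
  assert (hnn : forall i, 0 <= h i).
  { intros i. unfold h, hh. apply Rdiv_le_0_compat; auto. }
  destruct (exists_ceil lam Hl) as [j [Hj1 [Hj2 Hj3]]].
  destruct j as [|j1]. lia. replace (S j1 - 1)%nat with j1 in Hj2 by lia.
  assert (Hjk : (S j1 <= k)%nat).
  { assert (INR j1 < INR k) by lra. apply INR_lt in H. lia. }
  set (lo := pred j1).
  set (H := mx h lo (k - lo)).
  assert (Hh : forall i, (lo <= i <= k)%nat -> h i <= H).
  { intros i Hi. apply mx_ge. unfold lo in *. lia. }
  assert (H0 : 0 <= H) by (pose proof (Hh k ltac:(unfold lo; lia)); specialize (hnn k); lra).
  assert (Gm : forall m, (lo <= m)%nat -> (S m <= k)%nat -> Rabs (g (S m)) <= eps * H * pi m).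
  { intros m Hm1 Hm2. pose proof (g_abs _ _ _ _ _ C (S m)) as X. simpl pred in X.
    rewrite (qeq (S m)), (qeq m) in X.
    assert (E : d2 * INR (S m) * (h (S m) * pi (S m)) = d2 * h (S m) * (INR (S m) * pi (S m))) by ring.
    rewrite E in X. unfold pi in X. rewrite poi_rec in X. fold pi in X.
    assert (h (S m) <= H) by (apply Hh; lia). assert (h m <= H) by (apply Hh; lia).
    specialize (Hpi m). assert (0 <= d2 * lam * pi m) by (apply Rmult_le_pos; [apply Rmult_le_pos|]; lra).
    assert (0 <= d1 * pi m) by (apply Rmult_le_pos; lra).
    assert ((H - h (S m)) * (d2 * lam * pi m) >= 0) by (apply Rle_ge, Rmult_le_pos; lra).
    assert ((H - h m) * (d1 * pi m) >= 0) by (apply Rle_ge, Rmult_le_pos; lra).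
    unfold eps. nra. }
  assert (GB : forall n, (lo <= pred n)%nat -> (n <= k)%nat -> Rabs (g n) <= INR n / lam * (eps * H * pi n)).
  { intros n Hn1 Hn2. destruct n as [|m].
    - rewrite (c_g0 _ _ _ _ _ C), Rabs_R0. simpl. unfold Rdiv. lra.
    - simpl pred in Hn1. pose proof (Gm m Hn1 Hn2) as X.
      replace (INR (S m) / lam * (eps * H * pi (S m))) with (eps * H * ((INR (S m) * pi (S m)) / lam)) by (field; lra).
      unfold pi. rewrite poi_rec. fold pi. replace (lam * pi m / lam) with (pi m) by (field; lra). auto. }
  assert (Hj1lt : INR j1 / lam <= 1).
  { apply Rmult_le_reg_r with lam; auto. unfold Rdiv. rewrite Rmult_assoc, Rinv_l; lra. }
  assert (GBj1 : Rabs (g j1) <= eps * H * pi j1).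
  { pose proof (GB j1 ltac:(unfold lo; lia) ltac:(lia)) as X.
    assert (0 <= eps * H * pi j1) by (apply Rmult_le_pos; [apply Rmult_le_pos|]; auto; left; auto).
    eapply Rle_trans. apply X. rewrite <- (Rmult_1_l (eps*H*pi j1)) at 2. apply Rmult_le_compat_r; auto. }
  assert (A1 : Rabs (h (S j1) - h j1) <= 2 * eps * H).
  { unfold h. rewrite (hstep _ _ _ _ _ C j1). fold pi.
    pose proof (Gm j1 ltac:(unfold lo; lia) Hjk).
    apply abs_div_le; auto. eapply Rle_trans. apply Rabs_sub_le. lra. }
  assert (A2 : h lo <= h j1 + 2 * eps * H).
  { assert (0 <= eps * H) by (apply Rmult_le_pos; lra). destruct j1 as [|l]. unfold lo; simpl. lra.
    unfold lo; simpl pred. pose proof (hstep _ _ _ _ _ C l) as X. fold h pi in X.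
    pose proof (Gm l ltac:(unfold lo; simpl; lia) ltac:(lia)) as Y.
    pose proof (c_gle _ _ _ _ _ C l) as Z. rewrite (qeq l) in Z.
    assert (INR l <= lam) by (rewrite S_INR in Hj2; lra).
    assert (h l <= H) by (apply Hh; unfold lo; simpl; lia).
    assert (Z1 : INR l * (h l * pi l) <= lam * (H * pi l)).
    { apply Rmult_le_compat; auto. apply pos_INR.
      apply Rmult_le_pos; auto. left; auto. apply Rmult_le_compat_r; auto. left; auto. }
    assert (Z2 : d2 * INR l * (h l * pi l) <= d2 * lam * (H * pi l)).
    { rewrite !Rmult_assoc. apply Rmult_le_compat_l; auto. }
    assert (W : (g (S l) - g l) / pi l >= - (eps * H + d2 * lam * H)).
    { apply Rle_ge. apply Rmult_le_reg_r with (pi l); auto. unfold Rdiv. rewrite (Rmult_assoc (g (S l) - g l)), Rinv_l by (specialize (Hpi l); lra).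
      apply Rabs_le_between in Y. nra. }
    nra. }
  set (t := fun i => h i - g i / pi i).
  assert (tstep : forall m, t (S m) - t m = g (S m) * (lam - INR (S m)) / (lam * pi m)).
  { intros m. unfold t. pose proof (hstep _ _ _ _ _ C m) as X. fold h pi in X.
    pose proof (poi_rec lam m) as P. fold pi in P. pose proof (Hpi m). pose proof (Hpi (S m)).
    assert (INR (S m) > 0) by (apply lt_0_INR; lia).
    assert (E : pi (S m) = lam * pi m / INR (S m)) by (apply (Rmult_eq_reg_l (INR (S m))); [rewrite P; field; lra | lra]).
    replace (h (S m) - g (S m) / pi (S m) - (h m - g m / pi m)) with ((h (S m) - h m) - g (S m) / pi (S m) + g m / pi m) by ring.
    rewrite X, E. field. repeat split; lra. }
  assert (tbound : forall m, (S j1 <= m)%nat -> (S m <= k)%nat ->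
            Rabs (t (S m) - t m) <= eps * H * ((INR k - lam) / lam)).
  { intros m Hm1 Hm2. rewrite tstep. apply abs_div_le. specialize (Hpi m). nra.
    rewrite Rabs_mult. pose proof (Gm m ltac:(unfold lo; lia) Hm2).
    assert (Rabs (lam - INR (S m)) <= INR k - lam).
    { assert (INR (S j1) <= INR m) by (apply le_INR; lia). assert (INR (S m) <= INR k) by (apply le_INR; lia).
      rewrite S_INR in *. apply Rabs_le; lra. }
    replace (eps * H * ((INR k - lam) / lam) * (lam * pi m)) with ((eps * H * pi m) * (INR k - lam)) by (field; lra).
    apply Rmult_le_compat; auto using Rabs_pos. }
  assert (tsum : forall i, (S j1 + i <= k)%nat ->
            Rabs (t (S j1 + i)%nat - t (S j1)) <= INR i * (eps * H * ((INR k - lam) / lam))).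
  { induction i; intros Hi.
    - replace (S j1 + 0)%nat with (S j1) by lia. replace (t (S j1) - t (S j1)) with 0 by ring. rewrite Rabs_R0. simpl. lra.
    - replace (S j1 + S i)%nat with (S (S j1 + i)) by lia.
      replace (t (S (S j1 + i)) - t (S j1)) with ((t (S (S j1 + i)) - t (S j1 + i)%nat) + (t (S j1 + i)%nat - t (S j1))) by ring.
      eapply Rle_trans. apply Rabs_triang. rewrite S_INR.
      pose proof (tbound (S j1 + i)%nat ltac:(lia) ltac:(lia)). pose proof (IHi ltac:(lia)). lra. }
  assert (ht : forall i, (S j1 <= i <= k)%nat -> Rabs (h i - t i) <= 2 * u * H).
  { intros i Hi. unfold t. replace (h i - (h i - g i / pi i)) with (g i / pi i) by ring.
    apply abs_div_le; auto. pose proof (GB i ltac:(unfold lo; lia) ltac:(lia)) as X.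
    assert (INR i / lam <= INR k / lam).
    { unfold Rdiv. apply Rmult_le_compat_r. left; apply Rinv_0_lt_compat; lra. apply le_INR; lia. }
    assert (0 <= INR i / lam) by (apply Rdiv_le_0_compat; [apply pos_INR|lra]).
    specialize (Hpi i).
    assert (INR i / lam * (eps * H * pi i) <= INR k / lam * (eps * H * pi i)).
    { apply Rmult_le_compat_r; auto. apply Rmult_le_pos; [apply Rmult_le_pos|]; lra. }
    assert (INR k / lam * (eps * H * pi i) = (eps * (INR k / lam)) * H * pi i) by ring.
    assert ((2 * u - eps * (INR k / lam)) * (H * pi i) >= 0) by (apply Rle_ge, Rmult_le_pos; nra).
    nra. }
  assert (A3 : forall i, (S j1 <= i <= k)%nat -> Rabs (h i - h (S j1)) <= 5 * u * H).
  { intros i Hi. destruct (Nat.le_exists_sub (S j1) i ltac:(lia)) as [i' [Ei _]].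
    rewrite Nat.add_comm in Ei. subst i.
    pose proof (tsum i' ltac:(lia)) as X.
    assert (INR i' <= INR k - lam).
    { assert (INR (S j1 + i') <= INR k) by (apply le_INR; lia). rewrite plus_INR in H1. lra. }
    assert (0 <= eps * H * ((INR k - lam) / lam)) by (apply Rmult_le_pos; [apply Rmult_le_pos|apply Rdiv_le_0_compat]; lra).
    assert (INR i' * (eps * H * ((INR k - lam) / lam)) <= (INR k - lam) * (eps * H * ((INR k - lam) / lam))) by (apply Rmult_le_compat_r; auto).
    assert (E : (INR k - lam) * (eps * H * ((INR k - lam) / lam)) = eps * xi2 * H) by (unfold xi2; field; lra).
    assert ((u - eps * xi2) * H >= 0) by (apply Rle_ge, Rmult_le_pos; lra).
    pose proof (ht (S j1 + i')%nat ltac:(lia)). pose proof (ht (S j1) ltac:(lia)).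
    replace (h (S j1 + i')%nat - h (S j1)) with ((h (S j1 + i')%nat - t (S j1 + i')%nat) + (t (S j1 + i')%nat - t (S j1)) - (h (S j1) - t (S j1))) by ring.
    eapply Rle_trans. apply Rabs_sub_le. eapply Rle_trans. apply Rplus_le_compat_r. apply Rabs_triang.
    lra. }
  assert (Hqle : forall i, q i <= 1).
  { intros i. pose proof (q_le1 _ _ _ _ _ C (S i)). rewrite psum_S in H1.
    pose proof (psum_nonneg q i Hq). lra. }
  assert (Hpsq : forall n, 0 <= psum q n <= 1) by (intros; split; [apply psum_nonneg; auto | apply (q_le1 _ _ _ _ _ C)]).
  assert (Hpsp : forall n, 0 <= psum pi n <= 1).
  { intros; split. apply psum_nonneg; intros; left; auto. apply poi_psum_le1; auto. }
  assert (HPi : forall n, 0 < Pi n <= 1).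
  { intros n. split. pose proof (poi_tail_ge lam n Hl) as Y. fold pi in Y. pose proof (Hpi n). unfold Pi. lra.
    unfold Pi, poi_tail. fold pi. pose proof (Hpsp n). lra. }
  assert (Heps1 : eps <= 1/44) by lra.
  assert (RRg : forall n, (lo <= pred n)%nat -> (n <= k)%nat -> Rabs (RR lam n * g n) <= eps * H * Pi n).
  { intros n Hn1 Hn2. pose proof (GB n Hn1 Hn2) as X. rewrite Rabs_mult.
    rewrite (Rabs_right (RR lam n)) by (apply Rle_ge, RR_nonneg; auto).
    pose proof (RR_nonneg lam n Hl).
    assert (Y : RR lam n * Rabs (g n) <= RR lam n * (INR n / lam * (eps * H * pi n))) by (apply Rmult_le_compat_l; auto).
    eapply Rle_trans. apply Y.
    replace (RR lam n * (INR n / lam * (eps * H * pi n))) with ((INR n * poi_tail lam (S n)) / lam * (eps * H))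
      by (unfold RR; fold pi; pose proof (Hpi n); field; repeat split; lra).
    pose proof (Pi_S_bound lam n Hl) as Z.
    assert (INR n * poi_tail lam (S n) / lam <= Pi n).
    { apply Rmult_le_reg_r with lam; auto. unfold Rdiv. rewrite Rmult_assoc, Rinv_l by lra. unfold Pi. lra. }
    assert (0 <= eps * H) by (apply Rmult_le_pos; lra).
    replace (eps * H * Pi n) with (Pi n * (eps * H)) by ring. apply Rmult_le_compat_r; auto. }
  assert (Ident : forall n, q n + RR lam n * q n = Pi n * h n).
  { intros n. unfold RR, Pi. rewrite (poi_tail_S lam n). fold pi. rewrite (qeq n). field. specialize (Hpi n); lra. }
  assert (A4 : Rabs (1 - h j1) <= 4 * eps * H + 4 * eps).
  { pose proof (LI_ident _ _ _ _ _ C j1) as LI. pose proof (LI_poi lam j1 Hl) as LP. fold pi in LP.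
    pose proof (RI _ _ _ _ _ C (S j1) Hj3) as RIj. fold eps in RIj.
    assert (B1 : Rabs (LL lam j1 * g j1) <= eps * H).
    { rewrite Rabs_mult. pose proof (LL_ge1 lam j1 Hl). rewrite Rabs_right by lra.
      assert (LL lam j1 * Rabs (g j1) <= LL lam j1 * (eps * H * pi j1)) by (apply Rmult_le_compat_l; lra).
      assert (LL lam j1 * (eps * H * pi j1) = (eps * H) * psum pi (S j1)) by (rewrite LP; ring).
      pose proof (Hpsp (S j1)). assert (0 <= eps * H) by (apply Rmult_le_pos; lra). nra. }
    assert (B2 : Rabs (psum (Fl lam g) (S j1)) <= 2 * eps).
    { eapply Rle_trans. apply psum_abs.
      apply Rle_trans with (psum (fun m => d2 * lam * q m + d1 * q (pred m)) (S j1)).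
      { apply psum_le. intros m Hm. assert (INR m < lam) by (apply Rle_lt_trans with (INR j1); auto; apply le_INR; lia).
        eapply Rle_trans. apply Fl_abs; auto. apply (c_g0 _ _ _ _ _ C).
        eapply Rle_trans. apply (g_abs _ _ _ _ _ C m).
        assert (d2 * INR m * q m <= d2 * lam * q m).
        { rewrite !Rmult_assoc. apply Rmult_le_compat_l; auto. apply Rmult_le_compat_r; auto. lra. }
        lra. }
      rewrite psum_plus, psum_scal, psum_scal, psum_pred.
      pose proof (Hpsq (S j1)). pose proof (Hpsq j1). pose proof (Hqle 0%nat).
      assert (d2 * lam * psum q (S j1) <= d2 * lam) by (assert (0 <= d2 * lam) by nra; nra).
      assert (d1 * (q 0%nat + psum q j1) <= d1 * 2) by (apply Rmult_le_compat_l; lra).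
      assert (0 <= d2 * lam) by nra. unfold eps. lra. }
    assert (B3 : d2 * lam * d1 * q (pred (S j1)) <= eps).
    { simpl pred. pose proof (Hqle j1). pose proof (Hq j1).
      assert (0 <= d2 * lam) by nra.
      assert (d2 * lam * d1 <= eps * eps) by (apply Rmult_le_compat; lra).
      assert (eps * eps <= eps) by nra.
      assert (d2 * lam * d1 * q j1 <= d2 * lam * d1 * 1) by (apply Rmult_le_compat_l; [apply Rmult_le_pos|]; lra).
      lra. }
    assert (B4 : eps * (1 - psum q (S j1)) <= eps) by (pose proof (Hpsq (S j1)); nra).
    pose proof (RRg (S j1) ltac:(unfold lo; simpl; lia) Hjk) as B5.
    pose proof (Ident (S j1)) as I1.
    pose proof (A1) as B6.
    assert (EQ : 1 - h j1 = Pi (S j1) * (h (S j1) - h j1) - LL lam j1 * g j1 + psum (Fl lam g) (S j1)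
       + ((1 - psum q (S j1)) - q (S j1) - RR lam (S j1) * (q (S j1) - g (S j1))) - RR lam (S j1) * g (S j1)).
    { unfold Pi, poi_tail. fold pi. rewrite LP. rewrite LI. rewrite (qeq j1).
      unfold Pi in I1. unfold poi_tail in I1. fold pi in I1. rewrite LP in I1. nra. }
    rewrite EQ.
    assert (Rabs (Pi (S j1) * (h (S j1) - h j1)) <= 2 * eps * H).
    { rewrite Rabs_mult. rewrite Rabs_right by (apply Rle_ge; left; apply HPi).
      pose proof (HPi (S j1)). assert (0 <= 2 * eps * H) by (apply Rmult_le_pos; lra).
      pose proof (Rabs_pos (h (S j1) - h j1)). nra. }
    eapply Rle_trans. apply Rabs5.
    pose proof (HPi (S j1)).
    assert (eps * H * Pi (S j1) <= eps * H) by (assert (0 <= eps * H) by (apply Rmult_le_pos; lra); nra).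
    lra. }
  assert (HuH : eps * H <= u * H) by (apply Rmult_le_compat_r; lra).
  assert (A5 : H <= 2).
  { destruct (mx_att h lo (k - lo)) as [is [His HE]]. fold H in HE.
    assert (Hb : H <= h j1 + 7 * u * H).
    { destruct (le_lt_dec (S j1) is) as [Hc|Hc].
      - pose proof (A3 is ltac:(unfold lo in *; lia)). apply Rabs_le_between in H1. apply Rabs_le_between in A1.
        assert (0 <= u * H) by (apply Rmult_le_pos; lra). lra.
      - destruct (Nat.eq_dec is j1) as [->|Hne].
        + assert (0 <= u * H) by (apply Rmult_le_pos; lra). lra.
        + assert (is = lo) by (unfold lo in *; lia). subst is.
          assert (0 <= u * H) by (apply Rmult_le_pos; lra). lra. }
    apply Rabs_le_between in A4.
    assert (H <= 1 + 4 * u + 11 * u * H) by lra.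
    destruct (Rle_dec H 2) as [|Hc]; auto. exfalso.
    assert ((H - 2) * (1 - 11 * u) > 0) by (apply Rmult_lt_0_compat; lra). nra. }
  assert (A6 : Rabs (h k - 1) <= 26 * u).
  { pose proof (A3 k ltac:(lia)). apply Rabs_le_between in H1. apply Rabs_le_between in A1.
    apply Rabs_le_between in A4.
    assert (u * H <= u * 2) by (apply Rmult_le_compat_l; lra).
    apply Rabs_le. lra. }
  destruct k as [|k1]. lia.
  pose proof (RI _ _ _ _ _ C (S k1) Hk) as RIk. fold eps in RIk. simpl pred in RIk.
  pose proof (RRg (S k1) ltac:(unfold lo; simpl; lia) ltac:(lia)) as Rg.
  pose proof (Ident (S k1)) as I1.
  assert (B1 : d2 * lam * d1 * q k1 <= eps * Pi (S k1)).
  { rewrite (qeq k1). pose proof (poi_rec lam k1) as P. fold pi in P.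
    assert (Ek : pi k1 = INR (S k1) / lam * pi (S k1)) by (field_simplify; [rewrite P; field|]; lra).
    assert (h k1 <= H) by (apply Hh; unfold lo; lia).
    pose proof (poi_tail_ge lam (S k1) Hl) as Y. fold pi Pi in Y.
    assert (0 <= d2 * lam) by nra.
    assert (X1 : d2 * lam * d1 <= eps * eps) by (apply Rmult_le_compat; lra).
    assert (X2 : h k1 * pi k1 <= 2 * (INR (S k1) / lam) * Pi (S k1)).
    { rewrite Ek. assert (0 <= INR (S k1) / lam) by (apply Rdiv_le_0_compat; [apply pos_INR|lra]).
      specialize (Hpi (S k1)). specialize (hnn k1).
      apply Rle_trans with (2 * (INR (S k1) / lam * pi (S k1))).
      replace (h k1 * (INR (S k1) / lam * pi (S k1))) with (h k1 * (INR (S k1) / lam * pi (S k1))) by ring.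
      apply Rmult_le_compat_r. apply Rmult_le_pos; lra. lra.
      rewrite Rmult_assoc. apply Rmult_le_compat_l. lra. apply Rmult_le_compat_l; lra. }
    assert (0 <= h k1 * pi k1) by (apply Rmult_le_pos; [auto|left; auto]).
    assert (X3 : d2 * lam * d1 * (h k1 * pi k1) <= eps * eps * (2 * (INR (S k1) / lam) * Pi (S k1))).
    { apply Rmult_le_compat; auto. apply Rmult_le_pos; lra. }
    assert (X4 : eps * eps * (2 * (INR (S k1) / lam) * Pi (S k1)) = 2 * eps * (eps * (INR (S k1) / lam)) * Pi (S k1)) by ring.
    assert (X5 : 2 * eps * (eps * (INR (S k1) / lam)) <= 2 * eps * (2 * u)) by (apply Rmult_le_compat_l; lra).
    pose proof (HPi (S k1)).
    assert (2 * eps * (eps * (INR (S k1) / lam)) * Pi (S k1) <= 2 * eps * (2 * u) * Pi (S k1)) by (apply Rmult_le_compat_r; lra).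
    assert (2 * eps * (2 * u) * Pi (S k1) <= eps * Pi (S k1)).
    { apply Rmult_le_compat_r. lra. nra. }
    lra. }
  set (Qk := 1 - psum q (S k1)) in *.
  set (Pk := Pi (S k1)) in *.
  assert (HPk := HPi (S k1)). fold Pk in HPk.
  assert (HQk : 0 <= Qk) by (unfold Qk; pose proof (Hpsq (S k1)); lra).
  assert (Main : Rabs (Qk - Pk * h (S k1)) <= eps * Qk + 3 * eps * Pk).
  { replace (Qk - Pk * h (S k1)) with ((Qk - q (S k1) - RR lam (S k1) * (q (S k1) - g (S k1))) - RR lam (S k1) * g (S k1))
      by (rewrite <- I1; ring).
    eapply Rle_trans. apply Rabs_sub_le.
    assert (eps * H * Pk <= 2 * eps * Pk) by (apply Rmult_le_compat_r; nra).
    lra. }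
  unfold poi_tail in *. fold Qk.
  assert (Hx : Rabs (Qk / Pk - h (S k1)) <= eps * (Qk / Pk) + 3 * eps).
  { replace (Qk / Pk - h (S k1)) with ((Qk - Pk * h (S k1)) / Pk) by (field; lra).
    apply abs_div_le. lra.
    replace ((eps * (Qk / Pk) + 3 * eps) * Pk) with (eps * Qk + 3 * eps * Pk) by (field; lra). auto. }
  set (x := Qk / Pk) in *.
  assert (Hx0 : 0 <= x) by (unfold x; apply Rdiv_le_0_compat; lra).
  apply Rabs_le_between in Hx. apply Rabs_le_between in A6.
  assert (x <= 3).
  { assert (x * (1 - eps) <= 2 + 3 * eps) by nra.
    destruct (Rle_dec x 3) as [|Hc]; auto. exfalso.
    assert ((x - 3) * (1 - eps) > 0) by (apply Rmult_lt_0_compat; lra). nra. }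
  assert (eps * x <= 3 * eps) by nra.
  apply Rabs_le. lra.
Qed.

Definition gg (p : nat -> nat -> R) (n : nat) : R :=
  match n with O => p O O | S n' => p (S n') (S n') - p n' (S (S n')) end.

Lemma xi_sq k lam : 0 < lam -> ((INR k - lam) / sqrt lam) ^ 2 = (INR k - lam) ^ 2 / lam.
Proof.
  intros H. unfold Rdiv. rewrite Rpow_mult_distr. rewrite pow_inv. rewrite pow2_sqrt by lra. reflexivity.
Qed.

Theorem theorem2p3 :
  exists c C : R, 0 < c /\ 0 < C /\
  forall (p : nat -> nat -> R) (pW pWs : nat -> R) (lam d1 d2 : R),
    (forall n m, 0 <= p n m) ->
    (forall n, infinite_sum (fun m => p n m) (pW n)) ->
    (forall m, infinite_sum (fun n => p n m) (pWs m)) ->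
    infinite_sum pW 1 ->
    0 < lam ->
    infinite_sum (fun n => INR n * pW n) lam ->
    size_biased pW pWs lam ->
    (* Delta = W + 1 - W^s lies in {-1,0,1} a.s. *)
    (forall n m, p n m <> 0 -> (m = n \/ m = S n \/ m = S (S n))) ->
    0 <= d1 -> 0 <= d2 ->
    (* P(Delta = -1 | W) <= d1  a.s. *)
    (forall n, p n (S (S n)) <= d1 * pW n) ->
    (* P(Delta = 1 | W) <= d2 W  a.s. *)
    (forall n, p n n <= d2 * INR n * pW n) ->
    forall k : nat, lam <= INR k ->
    let xi := (INR k - lam) / sqrt lam in
    (d1 + d2 * lam) * (1 + xi ^ 2) <= c ->
    Rabs (pmf_tail pW k / poi_tail lam k - 1) <= C * (d1 + d2 * lam) * (1 + xi ^ 2).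
Proof.
  exists (1/44), 32. split. lra. split. lra.
  intros p pW pWs lam d1 d2 Hp HpW HpWs Hsum Hl Hmean Hsb Hsupp Hd1 Hd2 He Ha k Hk xi Hc.
  unfold xi in *. rewrite xi_sq in * by auto.
  assert (Hs : supp p) by exact Hsupp.
  pose proof (q_decomp p pW Hs HpW) as Qd.
  pose proof (ws_decomp p pWs Hs HpWs) as Wd.
  pose proof (sb_point pW pWs lam Hsb) as SB.
  assert (Hqnn : forall n, 0 <= pW n).
  { intros n. rewrite Qd. pose proof (Hp n n). pose proof (Hp n (S n)). pose proof (Hp n (S (S n))). lra. }
  assert (C : Core pW (gg p) lam d1 d2).
  { constructor; auto.
    - intros m. rewrite SB, Wd. f_equal. unfold wsd, gg. destruct m as [|m].
      + rewrite (Qd 0%nat). ring.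
      + rewrite (Qd (S m)). ring.
    - intros [|n]; simpl gg.
      + apply Ha.
      + pose proof (Ha (S n)). pose proof (Hp n (S (S n))). lra.
    - intros [|n]; simpl gg; simpl pred.
      + pose proof (Hp 0%nat 0%nat). pose proof (Hqnn 0%nat).
        assert (0 <= d1 * pW 0%nat) by (apply Rmult_le_pos; auto). lra.
      + pose proof (He n). pose proof (Hp (S n) (S n)). lra.
    - simpl. pose proof (Ha 0%nat). pose proof (Hp 0%nat 0%nat). simpl in H. lra.
    - intros [|n]; simpl gg.
      + rewrite (Qd 0%nat). pose proof (Hp 0%nat 1%nat). pose proof (Hp 0%nat 2%nat). lra.
      + rewrite (Qd (S n)). pose proof (Hp (S n) (S (S n))). pose proof (Hp (S n) (S (S (S n)))).
        pose proof (Hp n (S (S n))). lra. }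
  unfold pmf_tail. rewrite Rmult_assoc.
  apply (main_core pW (gg p) lam d1 d2 C k Hk). lra.
Qed.
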